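(* In any execution of $\mathcal{U}$, for every operation $o$, there is at most one execution of line 12 for $o$ that returns true. Equivalently: if line 12 is executed for $o$ and returns true at some time $T$, then every execution of line 12 for $o$ after time $T$ returns false.
   Context: Model: an asynchronous shared-memory system with possibly infinitely many processes, any of which may crash, communicating via atomic shared objects. A fetch-and-increment (F\&I) object stores an integer; F\&I$(C)$ atomically returns the current value and increments it. A generalized-compare-and-swap (GCAS) object $O$ stores a value and supports Read$(O)$ and GCAS$(c, O, v_1, v_2)$, which atomically does: if $c(\text{current value of } O, v_1)$ holds then set $O := v_2$ and return true, else return false. Tuples are compared componentwise for $=$; GCAS$(>, A, (t,-,-), v)$ succeeds iff the time field of $A$ is strictly greater than $t$. Implemented type $\mathcal{T} = (OP, RES, Q, \delta)$ with initial state $s_0$; a procedure $apply_{\mathcal{T}}(o,s)$ returns some $(s',r)$ with $(s,o,s',r)\in\delta$. $NULL$ is a value different from every response of $\mathcal{T}$, and $NOOP$ is a name different from every operation of $\mathcal{T}$. Algorithm $\mathcal{U}$: each process $p$ owns a GCAS object $H_p$ with fields $(time, response)$. Shared objects: F\&I object $C$, initially $1$; GCAS object $A$ with fields $(time, op, ptr)$, initially $(0, NOOP, h(NOOP))$, where $h(NOOP)$ is a pointer to an immutable location containing $(0,\perp)$; GCAS object $S$ with fields $(time, state, response, ptr)$, initially $(0, s_0, \perp, h(NOOP))$. Process $p$ performs operation $o$ by calling DoOp$(o)$: (1) DoOp$(o)$ invoked; (2) $t := $ F\&I$(C)$; (3) $H_p := (t, NULL)$; (4) while $H_p = (t, NULL)$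 do: (5) $(t^*, s^*, r^*, roptr^* ) := S$; (6) GCAS$(=, *roptr^*, (t^*, NULL), (t^*, r^* ))$; (7) GCAS$(>, A, (t,-,-), (t, o, \&H_p))$; (8) $(t', o', roptr') := A$; (9) $(\hat t, \hat r) := *roptr'$; (10) if $(\hat t,\hat r) = (t', NULL)$ then (11) $(s', r') := apply_{\mathcal{T}}(o', s^* )$; (12) GCAS$(=, S, (t^*,s^*,r^*,roptr^* ), (t', s', r', roptr'))$; (13) else GCAS$(=, A, (t', o', roptr'), (t, o, \&H_p))$; end while; (14) return $H_p.response$. Notation: an ''operation'' $o$ means one invocation of DoOp$(o)$ (or the initial $NOOP$). $p(o)$ is the process executing it; $t(o)$ is the value returned by its F\&I at line 2, or $\infty$ if line 2 has not been executed; $h(o)$ is $H_{p(o)}$. For $NOOP$: $t(NOOP)=0$ and $h(NOOP)$ is the immutable location containing $(0,\perp)$. ''Line 12 is executed for $o$'' means the new value written in that GCAS has the form $(t(o), -, r, h(o))$. *)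

(* Defs.v *)
(* Operational model of the universal construction U:
   an interleaving (atomic-step) semantics of the shared-memory algorithm. *)
From Stdlib Require Import Arith.
Set Implicit Arguments.

(* Processes are identified by natural numbers (possibly infinitely many). *)

(* Pointers to response locations: h(NOOP) (immutable) or &H_p. *)
Inductive ptr : Type := PNoop | PH (p : nat).

(* Values of a response field: NULL, the initial bottom, or a response of T. *)
Inductive rval (RES : Type) : Type := RNull | RBot | RVal (r : RES).
Arguments RNull {RES}. Arguments RBot {RES}.

Inductive opv (OP : Type) : Type := ONoop | OOp (o : OP).
Arguments ONoop {OP}.

Definition Aval (OP : Type) := (nat * opv OP * ptr)%type.            (* (time, op, ptr) *)
Definition Sval (Q RES : Type) := (nat * Q * rval RES * ptr)%type.   (* (time, state, response, ptr) *)
Definition Hval (RES : Type) := (nat * rval RES)%type.              (* (time, response) *)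

(* Local control state of a process: the next line to execute, with local variables.
   Idle = no pending DoOp (next step is an invocation, line 1). *)
Inductive loc (OP RES Q : Type) : Type :=
| Idle
| At2  (o : OP)
| At3  (o : OP) (t : nat)
| At4  (o : OP) (t : nat)
| At5  (o : OP) (t : nat)
| At6  (o : OP) (t : nat) (sv : Sval Q RES)
| At7  (o : OP) (t : nat) (sv : Sval Q RES)
| At8  (o : OP) (t : nat) (sv : Sval Q RES)
| At9  (o : OP) (t : nat) (sv : Sval Q RES) (av : Aval OP)
| At10 (o : OP) (t : nat) (sv : Sval Q RES) (av : Aval OP) (hv : Hval RES)
| At11 (o : OP) (t : nat) (sv : Sval Q RES) (av : Aval OP)
| At12 (o : OP) (t : nat) (sv : Sval Q RES) (av : Aval OP) (s' : Q) (r' : RES)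
| At13 (o : OP) (t : nat) (sv : Sval Q RES) (av : Aval OP)
| At14 (o : OP) (t : nat).
Arguments Idle {OP RES Q}.
Arguments At2 {OP RES Q}.
Arguments At3 {OP RES Q}.
Arguments At4 {OP RES Q}.
Arguments At5 {OP RES Q}.
Arguments At6 {OP RES Q}.
Arguments At7 {OP RES Q}.
Arguments At8 {OP RES Q}.
Arguments At9 {OP RES Q}.
Arguments At10 {OP RES Q}.
Arguments At11 {OP RES Q}.
Arguments At12 {OP RES Q}.
Arguments At13 {OP RES Q}.
Arguments At14 {OP RES Q}.

(* Global configuration: shared objects C, A, S, H_p, local states, and a ghost
   counter cK p = index of the current (or next) invocation of DoOp by p. *)
Record config (OP RES Q : Type) : Type := mkConfig {
  cC : nat;
  cA : Aval OP;
  cS : Sval Q RES;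
  cH : nat -> Hval RES;
  cL : nat -> loc OP RES Q;
  cK : nat -> nat }.

Definition upd {X : Type} (f : nat -> X) (p : nat) (v : X) : nat -> X :=
  fun q => if Nat.eqb q p then v else f q.

Definition setC OP RES Q (c : config OP RES Q) v :=
  mkConfig v (cA c) (cS c) (cH c) (cL c) (cK c).
Definition setA OP RES Q (c : config OP RES Q) v :=
  mkConfig (cC c) v (cS c) (cH c) (cL c) (cK c).
Definition setS OP RES Q (c : config OP RES Q) v :=
  mkConfig (cC c) (cA c) v (cH c) (cL c) (cK c).
Definition setH OP RES Q (c : config OP RES Q) p v :=
  mkConfig (cC c) (cA c) (cS c) (upd (cH c) p v) (cL c) (cK c).
Definition setL OP RES Q (c : config OP RES Q) p v :=
  mkConfig (cC c) (cA c) (cS c) (cH c) (upd (cL c) p v) (cK c).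
Definition setK OP RES Q (c : config OP RES Q) p v :=
  mkConfig (cC c) (cA c) (cS c) (cH c) (cL c) (upd (cK c) p v).

Definition deref OP RES Q (c : config OP RES Q) (x : ptr) : Hval RES :=
  match x with PNoop => (0, RBot) | PH q => cH c q end.

(* apply_T at line 11: any (s', r) with (s, o, s', r) in delta.  The NOOP case
   is unreachable at line 11; we allow any outcome there. *)
Definition apply_rel OP RES Q (delta : Q -> OP -> Q -> RES -> Prop)
  (ov : opv OP) (s : Q) (s' : Q) (r : RES) : Prop :=
  match ov with OOp o => delta s o s' r | ONoop => True end.

Inductive event (OP RES Q : Type) : Type :=
| EInvoke (p : nat) (o : OP)                         (* line 1 *)
| EFAI (p : nat) (k : nat) (t : nat)                  (* line 2 of p's k-th invocation, returns t *)
| EL12 (p : nat) (nv : Sval Q RES) (b : bool)          (* line 12 GCAS with new value nv, returning b *)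
| EReturn (p : nat) (r : rval RES)                    (* line 14 *)
| EOther (p : nat).
Arguments EInvoke {OP RES Q}. Arguments EFAI {OP RES Q}. Arguments EL12 {OP RES Q}.
Arguments EReturn {OP RES Q}. Arguments EOther {OP RES Q}.

Inductive step OP RES Q (delta : Q -> OP -> Q -> RES -> Prop) :
  config OP RES Q -> event OP RES Q -> config OP RES Q -> Prop :=
| st_l1 : forall c p o, cL c p = Idle ->
    step delta c (EInvoke p o) (setL c p (At2 o))
| st_l2 : forall c p o, cL c p = At2 o ->
    step delta c (EFAI p (cK c p) (cC c)) (setL (setC c (S (cC c))) p (At3 o (cC c)))
| st_l3 : forall c p o t, cL c p = At3 o t ->
    step delta c (EOther p) (setL (setH c p (t, RNull)) p (At4 o t))
| st_l4_loop : forall c p o t, cL c p = At4 o t -> cH c p = (t, RNull) ->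
    step delta c (EOther p) (setL c p (At5 o t))
| st_l4_exit : forall c p o t, cL c p = At4 o t -> cH c p <> (t, RNull) ->
    step delta c (EOther p) (setL c p (At14 o t))
| st_l5 : forall c p o t, cL c p = At5 o t ->
    step delta c (EOther p) (setL c p (At6 o t (cS c)))
| st_l6_succ : forall c p o t ts ss rs q, cL c p = At6 o t (ts, ss, rs, PH q) ->
    cH c q = (ts, RNull) ->
    step delta c (EOther p) (setL (setH c q (ts, rs)) p (At7 o t (ts, ss, rs, PH q)))
| st_l6_fail : forall c p o t ts ss rs x, cL c p = At6 o t (ts, ss, rs, x) ->
    deref c x <> (ts, RNull) ->
    step delta c (EOther p) (setL c p (At7 o t (ts, ss, rs, x)))
| st_l7_succ : forall c p o t sv ta oa pa, cL c p = At7 o t sv -> cA c = (ta, oa, pa) ->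
    ta > t ->
    step delta c (EOther p) (setL (setA c (t, OOp o, PH p)) p (At8 o t sv))
| st_l7_fail : forall c p o t sv ta oa pa, cL c p = At7 o t sv -> cA c = (ta, oa, pa) ->
    ~ ta > t ->
    step delta c (EOther p) (setL c p (At8 o t sv))
| st_l8 : forall c p o t sv, cL c p = At8 o t sv ->
    step delta c (EOther p) (setL c p (At9 o t sv (cA c)))
| st_l9 : forall c p o t sv ta oa pa, cL c p = At9 o t sv (ta, oa, pa) ->
    step delta c (EOther p) (setL c p (At10 o t sv (ta, oa, pa) (deref c pa)))
| st_l10_then : forall c p o t sv ta oa pa hv, cL c p = At10 o t sv (ta, oa, pa) hv ->
    hv = (ta, RNull) ->
    step delta c (EOther p) (setL c p (At11 o t sv (ta, oa, pa)))
| st_l10_else : forall c p o t sv ta oa pa hv, cL c p = At10 o t sv (ta, oa, pa) hv ->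
    hv <> (ta, RNull) ->
    step delta c (EOther p) (setL c p (At13 o t sv (ta, oa, pa)))
| st_l11 : forall c p o t ts ss rs ps ta oa pa s' r',
    cL c p = At11 o t (ts, ss, rs, ps) (ta, oa, pa) ->
    apply_rel delta oa ss s' r' ->
    step delta c (EOther p) (setL c p (At12 o t (ts, ss, rs, ps) (ta, oa, pa) s' r'))
| st_l12_succ : forall c p o t sv ta oa pa s' r',
    cL c p = At12 o t sv (ta, oa, pa) s' r' -> cS c = sv ->
    step delta c (EL12 p (ta, s', RVal r', pa) true)
      (setL (setS c (ta, s', RVal r', pa)) p (At4 o t))
| st_l12_fail : forall c p o t sv ta oa pa s' r',
    cL c p = At12 o t sv (ta, oa, pa) s' r' -> cS c <> sv ->
    step delta c (EL12 p (ta, s', RVal r', pa) false) (setL c p (At4 o t))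
| st_l13_succ : forall c p o t sv av, cL c p = At13 o t sv av -> cA c = av ->
    step delta c (EOther p) (setL (setA c (t, OOp o, PH p)) p (At4 o t))
| st_l13_fail : forall c p o t sv av, cL c p = At13 o t sv av -> cA c <> av ->
    step delta c (EOther p) (setL c p (At4 o t))
| st_l14 : forall c p o t, cL c p = At14 o t ->
    step delta c (EReturn p (snd (cH c p)))
      (setK (setL c p Idle) p (S (cK c p))).

(* Initial configuration: C = 1, A = (0, NOOP, h(NOOP)), S = (0, s0, bottom, h(NOOP)),
   all processes idle; the initial contents of the H_p are left arbitrary. *)
Definition initial OP RES Q (s0 : Q) (c : config OP RES Q) : Prop :=
  cC c = 1 /\ cA c = (0, ONoop, PNoop) /\ cS c = (0, s0, RBot, PNoop) /\
  (forall p, cL c p = Idle) /\ (forall p, cK c p = 0).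

(* A (finite prefix of an) execution with n steps: configurations c 0 .. c n,
   step i labelled l i. Infinite executions are covered since any two steps
   lie in a common finite prefix. *)
Definition execution OP RES Q (delta : Q -> OP -> Q -> RES -> Prop) (s0 : Q)
  (n : nat) (c : nat -> config OP RES Q) (l : nat -> event OP RES Q) : Prop :=
  initial s0 (c 0) /\ forall i, i < n -> step delta (c i) (l i) (c (S i)).

(* Operations: None = the initial NOOP; Some (p, k) = the k-th invocation of DoOp by p. *)
Definition operation := option (nat * nat)%type.

(* t(o) = t : the F&I of o at line 2 (within the first n steps) returned t;
   t(NOOP) = 0. If o has not executed line 2, t(o) = infinity: no such t. *)
Definition t_of OP RES Q (n : nat) (l : nat -> event OP RES Q) (o : operation) (t : nat) : Prop :=
  match o with
  | None => t = 0
  | Some (p, k) => exists i, i < n /\ l i = EFAI p k t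
  end.

Definition h_of (o : operation) : ptr :=
  match o with None => PNoop | Some (p, _) => PH p end.

Definition line12_true_for OP RES Q (n : nat) (l : nat -> event OP RES Q)
  (o : operation) (i : nat) : Prop :=
  i < n /\ exists t q s r, t_of n l o t /\ l i = EL12 q (t, s, r, h_of o) true.

(* Main.v *)
Require Import Defs.
From Stdlib Require Import Arith Lia FunctionalExtensionality PropExtensionality.

Section U.
Variables (OP RES Q : Type) (delta : Q -> OP -> Q -> RES -> Prop).
Notation cfg := (config OP RES Q).
Notation lc := (loc OP RES Q).

Definition spair (sv : Sval Q RES) : nat * ptr := let '(t,_,_,p) := sv in (t,p).
Definition sresp (sv : Sval Q RES) : rval RES := let '(_,_,r,_) := sv in r.
Definition apair (av : Aval OP) : nat * ptr := let '(t,_,p) := av in (t,p).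
Definition done (c : cfg) (x : nat * ptr) : Prop := deref c (snd x) <> (fst x, RNull).

Definition lav (l : lc) : option (Aval OP) := match l with
 | At9 _ _ _ av | At10 _ _ _ av _ | At11 _ _ _ av | At12 _ _ _ av _ _ | At13 _ _ _ av => Some av
 | _ => None end.
Definition lsv (l : lc) : option (Sval Q RES) := match l with
 | At6 _ _ sv | At7 _ _ sv | At8 _ _ sv | At9 _ _ sv _ | At10 _ _ sv _ _ | At11 _ _ sv _
 | At12 _ _ sv _ _ _ | At13 _ _ sv _ => Some sv | _ => None end.
Definition ltm (l : lc) : option nat := match l with
 | Idle | At2 _ => None
 | At3 _ t | At4 _ t | At5 _ t | At6 _ t _ | At7 _ t _ | At8 _ t _ | At9 _ t _ _ | At10 _ t _ _ _
 | At11 _ t _ _ | At12 _ t _ _ _ _ | At13 _ t _ _ | At14 _ t => Some t end.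

Definition spec (hist : nat*ptr -> Prop) (c : cfg) (l : lc) : Prop := match l with
 | At7 _ _ sv | At8 _ _ sv => cS c = sv -> done c (spair sv)
 | At9 _ _ sv av => cS c = sv -> done c (spair sv) /\ (hist (apair av) -> done c (apair av))
 | At10 _ _ sv av hv => cS c = sv -> done c (spair sv) /\
      (hv = (fst (apair av), RNull) -> ~ hist (apair av))
 | At11 _ _ sv av | At12 _ _ sv av _ _ => cS c = sv -> done c (spair sv) /\ ~ hist (apair av)
 | _ => True end.

Definition locInv hist (c : cfg) (l : lc) :=
 (forall t, ltm l = Some t -> t < cC c) /\
 (forall sv, lsv l = Some sv -> sresp sv <> RNull /\ hist (spair sv)) /\
 (forall av, lav l = Some av -> fst (apair av) < cC c) /\
 spec hist c l.

Definition Inv (hist : nat*ptr -> Prop) (c : cfg) :=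
 sresp (cS c) <> RNull /\
 hist (spair (cS c)) /\
 (forall x, hist x -> fst x < cC c) /\
 fst (apair (cA c)) < cC c /\
 (forall x, hist x -> x <> spair (cS c) -> done c x) /\
 (forall q o t', cL c q = At3 o t' ->
     (forall t, hist (t, PH q) -> t < t') /\
     (forall t, apair (cA c) = (t, PH q) -> t < t') /\
     (forall r av t, lav (cL c r) = Some av -> apair av = (t, PH q) -> t < t')) /\
 (forall r, locInv hist c (cL c r)).

Definition HistNext (hist : nat * ptr -> Prop) (c' : cfg) : nat * ptr -> Prop :=
  fun x => hist x \/ x = spair (cS c').

Lemma ptr_eq_dec (a b : ptr) : {a = b} + {a <> b}.
Proof. decide equality; apply Nat.eq_dec. Qed.
Lemma np_eq_dec (a b : nat * ptr) : {a = b} + {a <> b}.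
Proof. decide equality; [apply ptr_eq_dec | apply Nat.eq_dec]. Qed.

Lemma done_sameH (c c' : cfg) x : cH c' = cH c -> done c x -> done c' x.
Proof. intros E D. unfold done, deref in *. destruct x as [t [|q]]; simpl in *; [exact D|].
  rewrite E; exact D. Qed.

Lemma locInv_frame hist hist' (c c' : cfg) l :
  locInv hist c l ->
  cC c <= cC c' ->
  (forall x, hist x -> done c x -> done c' x) ->
  (forall x, hist x -> hist' x) ->
  ((cS c' = cS c /\ forall x, hist' x -> hist x) \/ (forall sv, hist (spair sv) -> cS c' <> sv)) ->
  locInv hist' c' l.
Proof.
  intros (Lt & Ls & La & Lsp) HC HD Hsub HS.
  assert (Hsv : forall sv, lsv l = Some sv -> hist (spair sv)) by (intros; apply Ls; auto).
  split; [intros t E; specialize (Lt t E); lia|].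
  split; [intros sv E; destruct (Ls sv E); split; auto|].
  split; [intros av E; specialize (La av E); lia|].
  destruct l; simpl in *; auto;
  (intros ES; destruct HS as [[E Hb] | Hn];
   [ rewrite E in ES; specialize (Lsp ES)
   | exfalso; exact (Hn _ (Hsv _ eq_refl) ES)]).
  - apply HD; auto.
  - apply HD; auto.
  - destruct Lsp as [L1 L2]; split; [apply HD; auto|].
    intros H; apply HD; auto.
  - destruct Lsp as [L1 L2]; split; [apply HD; auto|].
    intros Ehv Hh; apply (L2 Ehv); auto.
  - destruct Lsp as [L1 L2]; split; [apply HD; auto|]. intros Hh; apply L2; auto.
  - destruct Lsp as [L1 L2]; split; [apply HD; auto|]. intros Hh; apply L2; auto.
Qed.

Lemma Inv_step_gen hist (c c' : cfg) p (lnew : lc) :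
  Inv hist c ->
  cL c' = upd (cL c) p lnew ->
  cC c <= cC c' ->
  (forall x, hist x -> done c x -> done c' x) ->
  ((cS c' = cS c /\ locInv hist c' lnew) \/
   (exists o t sv av s' r', cL c p = At12 o t sv av s' r' /\ cS c = sv /\
      spair (cS c') = apair av /\ sresp (cS c') <> RNull /\ lnew = At4 o t)) ->
  (cA c' = cA c \/ (exists t o, cA c' = (t, o, PH p) /\ t < cC c' /\ forall o' t', lnew <> At3 o' t')) ->
  (forall av, lav lnew = Some av -> lav (cL c p) = Some av \/ av = cA c) ->
  (forall o t', lnew = At3 o t' -> cC c <= t') ->
  Inv (HistNext hist c') c'.
Proof.
  intros (S1 & HS0 & HT & TA & I3 & I2 & LI) HL HC HD HS HA Hlav H3.
  set (hist' := HistNext hist c').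
  assert (Hsub : forall x, hist x -> hist' x) by (intros; left; auto).
  assert (FC3 : (cS c' = cS c /\ forall x, hist' x -> hist x) \/
                ((forall sv, hist (spair sv) -> cS c' <> sv) /\ ~ hist (spair (cS c')))).
  { destruct HS as [[E _] | (o & t & sv & av & s' & r' & Ep & Es & Epair & _ & _)].
    - left; split; auto. intros x [Hx | Hx]; auto. rewrite Hx, E; auto.
    - right. pose proof (LI p) as Lp. rewrite Ep in Lp. destruct Lp as (_ & _ & _ & Lsp).
      simpl in Lsp. destruct (Lsp Es) as [_ Hn]. rewrite Epair.
      split; auto. intros sv0 Hh E0. apply Hn. rewrite <- Epair, E0. auto. }
  assert (LIp : forall r, cL c' r = lnew -> r = p -> locInv hist' c' lnew).
  { intros r _ _. destruct HS as [[E Lnew] | (o & t & sv & av & s' & r' & Ep & Es & Epair & _ & Eln)].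
    - apply (locInv_frame hist hist' c' c' lnew Lnew); auto.
      left; split; auto. destruct FC3 as [[_ F]|[_ F]]; auto.
      exfalso; apply F; rewrite E; auto.
    - subst lnew. pose proof (LI p) as Lp. rewrite Ep in Lp. destruct Lp as (Lt & _ & _ & _).
      specialize (Lt t eq_refl). unfold locInv; simpl. repeat split; try discriminate.
      intros t0 E; injection E; intros; subst; lia. }
  split; [|split; [|split; [|split; [|split; [|split]]]]].
  - destruct HS as [[E _] | (o & t & sv & av & s' & r' & _ & _ & _ & Hr & _)]; [rewrite E|]; auto.
  - right; reflexivity.
  - intros x [Hx | Hx]; [specialize (HT x Hx); lia|].
    destruct HS as [[E _] | (o & t & sv & av & s' & r' & Ep & Es & Epair & _ & _)].
    + rewrite Hx, E. specialize (HT _ HS0). lia.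
    + pose proof (LI p) as Lp. rewrite Ep in Lp. destruct Lp as (_ & _ & La & _).
      specialize (La av eq_refl). rewrite Hx, Epair. lia.
  - destruct HA as [E | (t & o & E & Ht & _)]; rewrite E; simpl; [lia|]. lia.
  - intros x [Hx | Hx] Hne; [|contradiction].
    destruct HS as [[E _] | (o & t & sv & av & s' & r' & Ep & Es & Epair & _ & _)].
    + apply HD; auto. apply I3; auto. rewrite <- E; auto.
    + apply HD; auto. destruct (np_eq_dec x (spair (cS c))) as [Ex | Ex]; [|apply I3; auto].
      pose proof (LI p) as Lp. rewrite Ep in Lp. destruct Lp as (_ & _ & _ & Lsp).
      simpl in Lsp. destruct (Lsp Es) as [Hd _]. rewrite Ex, Es; exact Hd.
  - intros q o t' Eq. rewrite HL in Eq. unfold upd in Eq.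
    destruct (Nat.eqb q p) eqn:Eqp.
    + apply Nat.eqb_eq in Eqp; subst q. specialize (H3 o t' Eq).
      split; [|split].
      * intros t [Hx | Hx]; [specialize (HT _ Hx); simpl in HT; lia|].
        destruct HS as [[E _] | (o1 & t1 & sv & av & s' & r' & _ & _ & _ & _ & Eln)];
          [|subst lnew; discriminate].
        rewrite E in Hx. specialize (HT _ HS0). rewrite <- Hx in HT. simpl in HT; lia.
      * intros t Ea. destruct HA as [E | (t1 & o1 & E & _ & Hn)]; [|exfalso; eapply Hn; eauto].
        rewrite E in Ea. rewrite Ea in TA. simpl in TA; lia.
      * intros r av t Er Ea. rewrite HL in Er. unfold upd in Er.
        destruct (Nat.eqb r p) eqn:Erp; [subst lnew; discriminate|].
        destruct (LI r) as (_ & _ & La & _). specialize (La av Er). rewrite Ea in La.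
        simpl in La; lia.
    + apply Nat.eqb_neq in Eqp. destruct (I2 q o t' Eq) as (Ih & Ia & Il).
      split; [|split].
      * intros t [Hx | Hx]; [auto|].
        destruct HS as [[E _] | (o1 & t1 & sv & av & s' & r' & Ep & _ & Epair & _ & _)].
        -- rewrite E in Hx. apply Ih. rewrite Hx; auto.
        -- apply (Il p av); [rewrite Ep; reflexivity|]. rewrite <- Epair; auto.
      * intros t Ea. destruct HA as [E | (t1 & o1 & E & _ & _)]; rewrite E in Ea; auto.
        simpl in Ea. injection Ea; intros; subst; congruence.
      * intros r av t Er Ea. rewrite HL in Er. unfold upd in Er.
        destruct (Nat.eqb r p) eqn:Erp.
        -- apply Nat.eqb_eq in Erp; subst r. destruct (Hlav av Er) as [E1 | E1].
           ++ apply (Il p av); auto.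
           ++ apply Ia. rewrite <- E1; auto.
        -- apply (Il r av); auto.
  - intros r. rewrite HL. unfold upd. destruct (Nat.eqb r p) eqn:Erp.
    + apply (LIp p); auto. rewrite HL; unfold upd; rewrite Nat.eqb_refl; auto.
    + apply (locInv_frame hist hist' c c'); auto.
      destruct FC3 as [F | [F _]]; auto.
Qed.

Ltac li_split := unfold locInv; simpl; split; [|split; [|split]].
Ltac fin_li :=
  first [ exact I
        | intros ? E; discriminate E
        | intros ? E; injection E; intros; subst; first [lia | assumption | split; assumption | match goal with Hx : _ |- _ => apply Hx; reflexivity end ]
        ].

Lemma Inv_step hist (c c' : cfg) e :
  Inv hist c -> step delta c e c' -> Inv (HistNext hist c') c'.
Proof.
  intros Hinv Hst. revert Hinv. destruct Hst; intros Hinv;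
  pose proof Hinv as (S1 & HS0 & HT & TA & I3 & I2 & LI);
  pose proof (LI p) as Lp; try (rewrite H in Lp; destruct Lp as (Lt & Ls & La & Lsp); simpl in Lt, Ls, La, Lsp).
  -
    apply (Inv_step_gen hist c _ p (At2 o)); [assumption|reflexivity|simpl; lia| | | | |].
    + intros x _ Hd; eapply done_sameH; [|exact Hd]; reflexivity.
    + left; split; [reflexivity|]. li_split; try fin_li.
    + left; reflexivity.
    + simpl; discriminate.
    + discriminate.
  -
    apply (Inv_step_gen hist c _ p (At3 o (cC c))); [assumption|reflexivity|simpl; lia| | | | |].
    + intros x _ Hd; eapply done_sameH; [|exact Hd]; reflexivity.
    + left; split; [reflexivity|]. li_split; try fin_li.
    + left; reflexivity.
    + simpl; discriminate.
    + intros o0 t' E; injection E; intros; subst; lia.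
  -
    apply (Inv_step_gen hist c _ p (At4 o t)); [assumption|reflexivity|simpl; lia| | | | |].
    + intros [t0 [|q]] Hh Hd; unfold done in *; simpl in *; auto.
      unfold upd. destruct (Nat.eqb q p) eqn:E; auto.
      apply Nat.eqb_eq in E; subst q. destruct (I2 p o t H) as (Ih & _ & _).
      specialize (Ih t0 Hh). intros Ee; injection Ee; intros; lia.
    + left; split; [reflexivity|]. li_split; try fin_li.
    + left; reflexivity.
    + simpl; discriminate.
    + discriminate.
  -
    apply (Inv_step_gen hist c _ p (At5 o t)); [assumption|reflexivity|simpl; lia| | | | |].
    + intros x _ Hd; eapply done_sameH; [|exact Hd]; reflexivity.
    + left; split; [reflexivity|]. li_split; try fin_li.
    + left; reflexivity.
    + simpl; discriminate.
    + discriminate.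
  -
    apply (Inv_step_gen hist c _ p (At14 o t)); [assumption|reflexivity|simpl; lia| | | | |].
    + intros x _ Hd; eapply done_sameH; [|exact Hd]; reflexivity.
    + left; split; [reflexivity|]. li_split; try fin_li.
    + left; reflexivity.
    + simpl; discriminate.
    + discriminate.
  -
    apply (Inv_step_gen hist c _ p (At6 o t (cS c))); [assumption|reflexivity|simpl; lia| | | | |].
    + intros x _ Hd; eapply done_sameH; [|exact Hd]; reflexivity.
    + left; split; [reflexivity|]. li_split; try fin_li.
    + left; reflexivity.
    + simpl; discriminate.
    + discriminate.
  -
    apply (Inv_step_gen hist c _ p (At7 o t (ts, ss, rs, PH q))); [assumption|reflexivity|simpl; lia| | | | |].
    + intros [t0 [|q0]] Hh Hd; unfold done in *; simpl in *; auto.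
      unfold upd. destruct (Nat.eqb q0 q) eqn:E; auto.
      apply Nat.eqb_eq in E; subst q0. destruct (Ls _ eq_refl) as [Hr _].
      intros Ee; injection Ee; intros; subst; auto.
    + left; split; [reflexivity|]. li_split; try fin_li.
      * intros _. unfold done; simpl. unfold upd; rewrite Nat.eqb_refl.
        destruct (Ls _ eq_refl) as [Hr _]. intros Ee; injection Ee; intros; subst; auto.
    + left; reflexivity.
    + simpl; discriminate.
    + discriminate.
  -
    apply (Inv_step_gen hist c _ p (At7 o t (ts, ss, rs, x))); [assumption|reflexivity|simpl; lia| | | | |].
    + intros x0 _ Hd; eapply done_sameH; [|exact Hd]; reflexivity.
    + left; split; [reflexivity|]. li_split; try fin_li.
      * intros _. unfold done; simpl. destruct x; simpl in *; auto.
    + left; reflexivity.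
    + simpl; discriminate.
    + discriminate.
  -
    apply (Inv_step_gen hist c _ p (At8 o t sv)); [assumption|reflexivity|simpl; lia| | | | |].
    + intros x0 _ Hd; eapply done_sameH; [|exact Hd]; reflexivity.
    + left; split; [reflexivity|]. li_split; try fin_li.
      * intros Es. eapply done_sameH; [|apply Lsp; exact Es]. reflexivity.
    + right. exists t, (OOp o). split; [reflexivity|]. split; [simpl; apply Lt; auto|].
      intros; discriminate.
    + simpl; discriminate.
    + discriminate.
  -
    apply (Inv_step_gen hist c _ p (At8 o t sv)); [assumption|reflexivity|simpl; lia| | | | |].
    + intros x0 _ Hd; eapply done_sameH; [|exact Hd]; reflexivity.
    + left; split; [reflexivity|]. li_split; try fin_li.
      * intros Es. eapply done_sameH; [|apply Lsp; exact Es]. reflexivity.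
    + left; reflexivity.
    + simpl; discriminate.
    + discriminate.
  -
    apply (Inv_step_gen hist c _ p (At9 o t sv (cA c))); [assumption|reflexivity|simpl; lia| | | | |].
    + intros x0 _ Hd; eapply done_sameH; [|exact Hd]; reflexivity.
    + left; split; [reflexivity|]. li_split; try fin_li.
      * intros Es. split; [apply Lsp; exact Es|]. intros Hh.
        destruct (np_eq_dec (apair (cA c)) (spair (cS c))) as [Ex|Ex].
        -- rewrite Ex, Es. apply Lsp; exact Es.
        -- apply I3; auto.
    + left; reflexivity.
    + simpl; intros ? E; injection E; intros; subst; right; reflexivity.
    + discriminate.
  -
    apply (Inv_step_gen hist c _ p (At10 o t sv (ta, oa, pa) (deref c pa))); [assumption|reflexivity|simpl; lia| | | | |].
    + intros x0 _ Hd; eapply done_sameH; [|exact Hd]; reflexivity.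
    + left; split; [reflexivity|]. li_split; try fin_li.
      * intros Es. split; [apply Lsp; exact Es|]. intros Ehv Hh. destruct (Lsp Es) as [_ Hd]. apply (Hd Hh). exact Ehv.
    + left; reflexivity.
    + simpl; intros ? E; injection E; intros; subst; left; rewrite H; reflexivity.
    + discriminate.
  -
    apply (Inv_step_gen hist c _ p (At11 o t sv (ta, oa, pa))); [assumption|reflexivity|simpl; lia| | | | |].
    + intros x0 _ Hd; eapply done_sameH; [|exact Hd]; reflexivity.
    + left; split; [reflexivity|]. li_split; try fin_li.
      * intros Es. split; [apply Lsp; exact Es|]. destruct (Lsp Es) as [_ Hd]. apply Hd. exact H0.
    + left; reflexivity.
    + simpl; intros ? E; injection E; intros; subst; left; rewrite H; reflexivity.
    + discriminate.
  -
    apply (Inv_step_gen hist c _ p (At13 o t sv (ta, oa, pa))); [assumption|reflexivity|simpl; lia| | | | |].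
    + intros x0 _ Hd; eapply done_sameH; [|exact Hd]; reflexivity.
    + left; split; [reflexivity|]. li_split; try fin_li.
    + left; reflexivity.
    + simpl; intros ? E; injection E; intros; subst; left; rewrite H; reflexivity.
    + discriminate.
  -
    apply (Inv_step_gen hist c _ p (At12 o t (ts, ss, rs, ps) (ta, oa, pa) s' r')); [assumption|reflexivity|simpl; lia| | | | |].
    + intros x0 _ Hd; eapply done_sameH; [|exact Hd]; reflexivity.
    + left; split; [reflexivity|]. li_split; try fin_li.
      * intros Es. apply Lsp; exact Es.
    + left; reflexivity.
    + simpl; intros ? E; injection E; intros; subst; left; rewrite H; reflexivity.
    + discriminate.
  -
    apply (Inv_step_gen hist c _ p (At4 o t)); [assumption|reflexivity|simpl; lia| | | | |].
    + intros x0 _ Hd; eapply done_sameH; [|exact Hd]; reflexivity.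
    + right. exists o, t, sv, (ta, oa, pa), s', r'. repeat split; auto. simpl; discriminate.
    + left; reflexivity.
    + simpl; discriminate.
    + discriminate.
  -
    apply (Inv_step_gen hist c _ p (At4 o t)); [assumption|reflexivity|simpl; lia| | | | |].
    + intros x0 _ Hd; eapply done_sameH; [|exact Hd]; reflexivity.
    + left; split; [reflexivity|]. li_split; try fin_li.
    + left; reflexivity.
    + simpl; discriminate.
    + discriminate.
  -
    apply (Inv_step_gen hist c _ p (At4 o t)); [assumption|reflexivity|simpl; lia| | | | |].
    + intros x0 _ Hd; eapply done_sameH; [|exact Hd]; reflexivity.
    + left; split; [reflexivity|]. li_split; try fin_li.
    + right. exists t, (OOp o). split; [reflexivity|]. split; [simpl; apply Lt; auto|].
      intros; discriminate.
    + simpl; discriminate.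
    + discriminate.
  -
    apply (Inv_step_gen hist c _ p (At4 o t)); [assumption|reflexivity|simpl; lia| | | | |].
    + intros x0 _ Hd; eapply done_sameH; [|exact Hd]; reflexivity.
    + left; split; [reflexivity|]. li_split; try fin_li.
    + left; reflexivity.
    + simpl; discriminate.
    + discriminate.
  -
    apply (Inv_step_gen hist c _ p Idle); [assumption|reflexivity|simpl; lia| | | | |].
    + intros x0 _ Hd; eapply done_sameH; [|exact Hd]; reflexivity.
    + left; split; [reflexivity|]. li_split; try fin_li.
    + left; reflexivity.
    + simpl; discriminate.
    + discriminate.
Qed.

Definition Hist (c : nat -> cfg) k (x : nat * ptr) : Prop := exists m, m <= k /\ spair (cS (c m)) = x.

Lemma Inv_init s0 (c : cfg) : initial s0 c -> Inv (fun x => x = spair (cS c)) c.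
Proof.
  intros (EC & EA & ES & EL & _).
  split; [|split; [|split; [|split; [|split; [|split]]]]].
  - rewrite ES; simpl; discriminate.
  - reflexivity.
  - intros x Hx; subst x; rewrite ES, EC; simpl; lia.
  - rewrite EA, EC; simpl; lia.
  - intros x Hx Hn; contradiction.
  - intros q o t' E; rewrite EL in E; discriminate.
  - intros r; rewrite EL; li_split; try fin_li.
Qed.

Lemma Inv_exec s0 n c l : execution delta s0 n c l -> forall k, k <= n -> Inv (Hist c k) (c k).
Proof.
  intros [Hin Hst]. induction k as [|k IH]; intros Hk.
  - assert (E : Hist c 0 = fun x => x = spair (cS (c 0))).
    { apply functional_extensionality; intro x; apply propositional_extensionality; split.
      - intros (m & Hm & E). assert (m = 0) by lia; subst; auto.
      - intros ->; exists 0; auto. }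
    rewrite E. apply (Inv_init s0); auto.
  - assert (E : Hist c (S k) = HistNext (Hist c k) (c (S k))).
    { apply functional_extensionality; intro x; apply propositional_extensionality; split.
      - intros (m & Hm & Em). destruct (Nat.eq_dec m (S k)) as [->|Hne].
        + right; auto.
        + left; exists m; split; auto; lia.
      - intros [(m & Hm & Em) | Ex].
        + exists m; split; auto; lia.
        + exists (S k); auto. }
    rewrite E. apply (Inv_step (Hist c k) (c k) (c (S k)) (l k)); [apply IH; lia|apply Hst; lia].
Qed.

Definition busy (l : lc) : Prop := match l with Idle | At2 _ => False | _ => True end.

Lemma K_step (c c' : cfg) e : step delta c e c' ->
  forall q, cK c q <= cK c' q /\ (busy (cL c q) -> cK c' q = cK c q -> busy (cL c' q)).
Proof.
  intros Hst q; destruct Hst; simpl; unfold upd; destruct (Nat.eqb q p) eqn:E;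
    try (apply Nat.eqb_eq in E; subst q); try rewrite H; simpl; split; auto; try lia.
Qed.

Lemma fai_inv (c c' : cfg) p kk t : step delta c (EFAI p kk t) c' ->
  (exists o, cL c p = At2 o) /\ kk = cK c p /\ cK c' p = kk /\ busy (cL c' p).
Proof.
  intros Hst; inversion Hst; subst. simpl; unfold upd; rewrite Nat.eqb_refl.
  repeat split; eauto.
Qed.

Lemma FAI_J s0 n c l p kk t : execution delta s0 n c l ->
  forall m, m <= n -> forall i, i < m -> l i = EFAI p kk t ->
  kk < cK (c m) p \/ (kk = cK (c m) p /\ busy (cL (c m) p)).
Proof.
  intros [_ Hst]. induction m as [|m IH]; intros Hm i Hi Ei; [lia|].
  destruct (K_step _ _ _ (Hst m ltac:(lia)) p) as [K1 K2].
  destruct (Nat.eq_dec i m) as [->|Hne].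
  - pose proof (Hst m ltac:(lia)) as Sm. rewrite Ei in Sm.
    destruct (fai_inv _ _ _ _ _ Sm) as (_ & _ & E1 & E2).
    right; auto.
  - destruct (IH ltac:(lia) i ltac:(lia) Ei) as [H1 | [H1 H2]]; [left; lia|].
    destruct (Nat.eq_dec (cK (c (S m)) p) (cK (c m) p)) as [Eq|Neq].
    + right; split; [lia|]. apply K2; auto.
    + left; lia.
Qed.

Lemma FAI_unique s0 n c l p kk t1 t2 i1 i2 : execution delta s0 n c l ->
  i1 < n -> i2 < n -> l i1 = EFAI p kk t1 -> l i2 = EFAI p kk t2 -> t1 = t2.
Proof.
  intros Hex H1 H2 E1 E2.
  assert (Gen : forall a b ta tb, a < b -> b < n -> l a = EFAI p kk ta -> l b = EFAI p kk tb -> False).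
  { intros a b ta tb Hab Hb Ea Eb.
    destruct (FAI_J s0 n c l p kk ta Hex b ltac:(lia) a Hab Ea) as [J | [J1 J2]];
    destruct Hex as [_ Hst]; pose proof (Hst b Hb) as Sb; rewrite Eb in Sb;
    destruct (fai_inv _ _ _ _ _ Sb) as ((o & Eo) & Ek & _ & _).
    - lia.
    - rewrite Eo in J2; exact J2. }
  destruct (lt_eq_lt_dec i1 i2) as [[Hlt|Heq]|Hgt].
  - exfalso; eapply Gen; eauto.
  - subst; rewrite E1 in E2; congruence.
  - exfalso; eapply Gen; eauto.
Qed.

Lemma l12_inv (c c' : cfg) q nv : step delta c (EL12 q nv true) c' ->
  cS c' = nv /\ exists o t sv av s' r', cL c q = At12 o t sv av s' r' /\ cS c = sv /\ spair nv = apair av.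
Proof.
  intros Hst; inversion Hst; subst. split; [reflexivity|].
  do 6 eexists; split; [eassumption|]. split; [reflexivity|]. reflexivity.
Qed.

Lemma key s0 n c l i j q1 q2 t h s1 s2 r1 r2 : execution delta s0 n c l ->
  i < j -> j < n -> l i = EL12 q1 (t, s1, r1, h) true -> l j = EL12 q2 (t, s2, r2, h) true -> False.
Proof.
  intros Hex Hij Hj Ei Ej.
  pose proof (Inv_exec s0 n c l Hex j ltac:(lia)) as (_ & _ & _ & _ & _ & _ & LI).
  destruct Hex as [_ Hst].
  pose proof (Hst i ltac:(lia)) as Si; rewrite Ei in Si.
  pose proof (Hst j Hj) as Sj; rewrite Ej in Sj.
  destruct (l12_inv _ _ _ _ Si) as [ESi _].
  destruct (l12_inv _ _ _ _ Sj) as [_ (o & t' & sv & av & s' & r' & EL & ES & Ep)].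
  specialize (LI q2). rewrite EL in LI. destruct LI as (_ & _ & _ & Lsp). simpl in Lsp.
  destruct (Lsp ES) as [_ Hn]. apply Hn. exists (S i). split; [lia|].
  rewrite ESi. simpl in Ep. rewrite <- Ep. reflexivity.
Qed.

End U.

Theorem mainTheorem12 :
  forall (OP RES Q : Type) (delta : Q -> OP -> Q -> RES -> Prop) (s0 : Q)
         (n : nat) (c : nat -> config OP RES Q) (l : nat -> event OP RES Q),
    execution delta s0 n c l ->
    forall (o : operation) (i j : nat),
      line12_true_for n l o i -> line12_true_for n l o j -> i = j.
Proof.
  intros OP RES Q delta s0 n c l Hex o i j [Hi (t1 & q1 & s1 & r1 & Ht1 & Ei)] [Hj (t2 & q2 & s2 & r2 & Ht2 & Ej)].
  assert (t1 = t2).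
  { destruct o as [[p k]|]; simpl in Ht1, Ht2.
    - destruct Ht1 as (i1 & Hi1 & E1); destruct Ht2 as (i2 & Hi2 & E2).
      exact (FAI_unique _ _ _ delta s0 n c l p k t1 t2 i1 i2 Hex Hi1 Hi2 E1 E2).
    - subst; auto. }
  subst t2.
  destruct (lt_eq_lt_dec i j) as [[Hlt|Heq]|Hgt]; auto; exfalso.
  - eapply key; eauto.
  - eapply key; eauto.
Qed.
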